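(* Fix an integer $d\ge2$. For any $k\in\mathbb{N}$ and $q\in(0,1)$ there exists $q'<q$ such that the following holds. For every $b'\subseteq\{1,\dots,k+1\}$, with $b=b'\cap\{1,\dots,k\}$, there exists a coupling $(A,B)$ of random subsets $A,B\subseteq[d]_\star$ such that $A\preceq B$ almost surely, $A$ has law $\mathscr{A}_{q,k}(b)$, and $B$ has law $\mathscr{A}_{q',k+1}(b')$.
   Context: $[d]=\{1,\dots,d\}$, $[d]_\star=\bigcup_{n\ge0}[d]^n$ (finite sequences, $[d]^0=\{o\}$ with $o$ the empty sequence), with concatenation $u\cdot v$. For $u\in[d]_\star$, $\mathrm{prog}(u)=\{u\cdot v:v\in[d]_\star\}$ and $\tau_u:\mathrm{prog}(u)\to[d]_\star$ is the shift $\tau_u(u\cdot v)=v$. For $\hat q\in(0,1)$, $m\in\mathbb{N}$ and $c\subseteq\{1,\dots,m\}$, $\mathscr{A}_{\hat q,m}(c)$ denotes the law of the random subset of $\bigcup_{i\in c}[d]^{m-i}$ in which each point is included independently with probability $\hat q$. For $A,B\subseteq[d]_\star$, write $A\preceq B$ if there exist $u,v\in[d]_\star$ with $A\subseteq\mathrm{prog}(u)$ and $\tau_u(A)\subseteq\tau_v(B\cap\mathrm{prog}(v))$. *)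

(* Defs.v *)
From HB Require Import structures.
From mathcomp Require Import all_boot all_order all_algebra.
From mathcomp Require Import finmap.
Set Implicit Arguments. Unset Strict Implicit. Unset Printing Implicit Defensive.
Import Order.TTheory GRing.Theory Num.Theory.
Local Open Scope ring_scope.
Local Open Scope fset_scope.

(* [d]_star : finite words over the alphabet [d], represented by 'I_d
   (letter j : 'I_d stands for j+1 in {1,...,d}); concatenation is ++,
   the empty word o is [::]. *)
Definition word (d : nat) := seq 'I_d.

Definition in_prog d (u : word d) (w : word d) : Prop := exists v : word d, w = u ++ v.

(* tau_u(X) for X a subset of prog(u) (general X: image of X ∩ prog u under tau_u):
   { v : u.v in X } *)
Definition shift d (u : word d) (X : word d -> Prop) : word d -> Prop :=
  fun v => X (u ++ v).

Definition preceq d (A B : word d -> Prop) : Prop :=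
  exists u v : word d,
    (forall w, A w -> in_prog u w) /\
    (forall x, shift u A x -> shift v (fun w => B w /\ in_prog v w) x).

(* The finite set  U_{m}(c) = \bigcup_{i in c, 1 <= i <= m} [d]^{m-i}, listed
   by word length n = m - i, 0 <= n < m (each word listed once). *)
Definition layer d (n : nat) : seq (word d) :=
  [seq val t | t <- enum {: n.-tuple 'I_d}].

Definition supp_set d (m : nat) (c : {fset nat}) : seq (word d) :=
  flatten [seq layer d n | n <- iota 0 m & (m - n)%N \in c].

Definition lawA d (R : realDomainType) (qh : R) (m : nat) (c : {fset nat})
    (S : {fset word d}) : R :=
  if all (fun w => w \in supp_set d m c) (enum_fset S)
  then qh ^+ #|` S| * (1 - qh) ^+ (size (supp_set d m c) - #|` S|)
  else 0.

(* A (finitely supported, hence discrete) coupling of random finite subsets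
   A, B of [d]_star, given by its joint mass function mu, whose marginals are
   lA and lB and such that Rel A B holds almost surely. *)
Definition coupling d (R : realDomainType)
    (lA lB : {fset word d} -> R) (Rel : {fset word d} -> {fset word d} -> Prop) :=
  exists (mu : {fset word d} * {fset word d} -> R)
         (s : seq ({fset word d} * {fset word d})),
    uniq s /\
    (forall p, 0 <= mu p) /\
    (forall p, p \notin s -> mu p = 0) /\
    \sum_(p <- s) mu p = 1 /\
    (forall S, \sum_(p <- s | p.1 == S) mu p = lA S) /\
    (forall S, \sum_(p <- s | p.2 == S) mu p = lB S) /\
    (forall p, p \in s -> 0 < mu p -> Rel p.1 p.2).

(* Main.v *)
Require Import Defs.
From HB Require Import structures.
From mathcomp Require Import all_boot all_order all_algebra.
From mathcomp Require Import finmap.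
From mathcomp Require Import reals.
From mathcomp Require Import zify ring lra.
Import Order.TTheory GRing.Theory Num.Theory.
Local Open Scope ring_scope.
Local Open Scope fset_scope.
Set Implicit Arguments. Unset Strict Implicit. Unset Printing Implicit Defensive.
Fixpoint subs (K : choiceType) (L : seq K) : seq {fset K} :=
  if L is x :: L' then subs L' ++ [seq x |` X | X <- subs L'] else [:: fset0].

Lemma enumfsE (K : choiceType) (X : {fset K}) y : (y \in enum_fset X) = (y \in X).
Proof. by []. Qed.

Lemma mem_subs (K : choiceType) (L : seq K) (X : {fset K}) :
  (X \in subs L) = all (fun w => w \in L) (enum_fset X).
Proof.
elim: L X => [|x L IH] X /=.
  rewrite inE; apply/eqP/allP => [-> y //|H].
  by apply/fsetP => y; rewrite in_fset0; apply/negP => /H.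
rewrite mem_cat IH; apply/idP/allP.
  case/orP => [/allP H y /H|]; first by move=> yL; rewrite inE yL orbT.
  case/mapP => T; rewrite IH => /allP H -> y; rewrite enumfsE in_fset1U.
  case/orP => [/eqP ->|/H]; first by rewrite inE eqxx.
  by move=> yL; rewrite inE yL orbT.
move=> H; case xS: (x \in X).
  apply/orP; right; apply/mapP; exists (X `\ x); last by rewrite fsetD1K.
  rewrite IH; apply/allP => y; rewrite in_fsetD1 => /andP[yx /H].
  by rewrite inE (negbTE yx).
apply/orP; left; apply/allP => y yS; move: (H y yS); rewrite inE.
case: eqP => [eyx|//]; rewrite enumfsE in yS.
by rewrite -eyx yS in xS.
Qed.

Lemma subs_uniq (K : choiceType) (L : seq K) : uniq L -> uniq (subs L).
Proof.
elim: L => [|x L IH] //= /andP[xL uL].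
rewrite cat_uniq IH //= map_inj_in_uniq ?IH //.
  rewrite andbT; apply/hasPn => T /mapP [X _ ->]; rewrite mem_subs.
  apply/negP => /allP /(_ x); rewrite fsetU11 => /(_ isT); exact/negP.
move=> X1 X2; rewrite !mem_subs => /allP H1 /allP H2 E.
have n1 : x \notin X1 by apply/negP => /H1; exact/negP.
have n2 : x \notin X2 by apply/negP => /H2; exact/negP.
by rewrite -(fsetU1K n1) E fsetU1K.
Qed.

Lemma sum_subs_prod (K : choiceType) (R : comRingType) (L : seq K) (f g : K -> R) :
  uniq L ->
  \sum_(X <- subs L) \prod_(x <- L) (if x \in X then f x else g x) =
  \prod_(x <- L) (f x + g x).
Proof.
elim: L => [|y L IH] /=; first by rewrite big_seq1 !big_nil.
case/andP=> yL uL; rewrite big_cat big_map /= big_cons.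
have E1 : forall X, X \in subs L -> y \notin X.
  move=> X; rewrite mem_subs => /allP H; apply/negP => /H; exact/negP.
rewrite (eq_big_seq (fun X : {fset K} => g y * \prod_(x <- L) (if x \in X then f x else g x))); last first.
  move=> X /E1 /negbTE yX; by rewrite big_cons yX.

rewrite [X in (_ + X)%R = _](eq_big_seq (fun X : {fset K} => f y * \prod_(x <- L) (if x \in X then f x else g x))); last first.
  move=> X _; rewrite big_cons fsetU11; congr (_ * _); apply: eq_big_seq => x xL.
  rewrite in_fset1U; case: eqP => // exy; by move: yL; rewrite -exy xL.
by rewrite -!big_distrr /= IH // mulrDl addrC.
Qed.
Lemma prod_const_seq (I : Type) (R : comRingType) (r : seq I) (c : R) :
  \prod_(x <- r) c = c ^+ size r.
Proof. by elim: r => [|x r IH]; rewrite ?big_nil ?big_cons ?IH ?exprS. Qed.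

Lemma prod_restrict (K : eqType) (R : comRingType) (L P : seq K) (h : K -> R) :
  uniq L -> uniq P -> {subset P <= L} ->
  \prod_(x <- L) (if x \in P then h x else 1) = \prod_(x <- P) h x.
Proof.
move=> uL uP sPL; rewrite -big_mkcond -big_filter; apply: perm_big.
apply: uniq_perm; rewrite ?filter_uniq // => x; rewrite mem_filter.
by case xP: (x \in P) => //=; rewrite sPL.
Qed.

Lemma count_sub (K : eqType) (L P : seq K) :
  uniq L -> uniq P -> {subset P <= L} -> count (fun x => x \in P) L = size P.
Proof.
move=> uL uP sPL; rewrite -size_filter; apply: perm_size.
apply: uniq_perm; rewrite ?filter_uniq // => x; rewrite mem_filter.
by case xP: (x \in P) => //=; rewrite sPL.
Qed.

Lemma prod_weight (K : choiceType) (R : comRingType) (L : seq K) (X : {fset K}) (a b : R) :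
  uniq L -> all (fun w => w \in L) (enum_fset X) ->
  \prod_(x <- L) (if x \in X then a else b) = a ^+ #|` X| * b ^+ (size L - #|` X|).
Proof.
move=> uL /allP sXL.
rewrite (eq_bigr (fun x => (if x \in enum_fset X then a else 1) * (if x \notin X then b else 1))); last first.
  by move=> x _; rewrite enumfsE; case: (x \in X); rewrite ?mulr1 ?mul1r.
rewrite big_split /= prod_restrict // prod_const_seq; congr (_ * _).
rewrite -big_mkcond -big_filter prod_const_seq size_filter.
have := count_predC (fun x => x \in enum_fset X) L.
rewrite (count_sub uL (fset_uniq X) sXL) => <-.
by rewrite addKn.
Qed.

Lemma mem_layer d n (w : word d) : (w \in layer d n) = (size w == n).
Proof.
apply/mapP/eqP => [[t _ ->]|E]; first exact: size_tuple.
by exists (Tuple (introT eqP E)); rewrite ?mem_enum.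
Qed.

Lemma layer_uniq d n : uniq (layer d n).
Proof. by rewrite map_inj_uniq ?enum_uniq //; exact: val_inj. Qed.

Lemma mem_supp d m c (w : word d) :
  (w \in supp_set d m c) = ((size w < m)%N && ((m - size w)%N \in c)).
Proof.
apply/flattenP/andP => [[s /mapP [n nF ->]]|[H1 H2]].
  rewrite mem_layer => /eqP ->; move: nF; rewrite mem_filter mem_iota.
  by case/andP => -> /andP [_ ->].
exists (layer d (size w)); last by rewrite mem_layer.
by apply: map_f; rewrite mem_filter mem_iota H2 H1.
Qed.

Lemma flatten_layer_uniq d (ns : seq nat) : uniq ns -> uniq (flatten [seq layer d n | n <- ns]).
Proof.
elim: ns => [|n ns IH] //= /andP [nns uns]; rewrite cat_uniq layer_uniq IH // andbT.
apply/hasPn => w /flattenP [s /mapP [n' n'ns ->]]; rewrite !mem_layer => /eqP ->.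
by apply/eqP => E; move: nns; rewrite -E n'ns.
Qed.

Lemma supp_uniq d m c : uniq (supp_set d m c).
Proof. by apply: flatten_layer_uniq; rewrite filter_uniq ?iota_uniq. Qed.

Lemma size_supp d m c : (size (supp_set d m c) <= \sum_(n <- iota 0 m) size (layer d n))%N.
Proof.
rewrite /supp_set size_flatten /shape sumnE !big_map big_filter big_mkcond /=.
by apply: leq_sum => n _; case: ifP.
Qed.
Local Close Scope fset_scope.
Lemma pow_diff (R : realFieldType) (x y : R) n :
  0 <= x -> x <= y -> y <= 1 -> y ^+ n <= x ^+ n + n%:R * (y - x).
Proof.
move=> x0 xy y1; elim: n => [|n IH]; first by rewrite !expr0 mul0r addr0.
have X0 : 0 <= x ^+ n by rewrite exprn_ge0.
have X1 : x ^+ n <= 1 by rewrite exprn_ile1 // (le_trans xy).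
have n0 : 0 <= n%:R :> R by rewrite ler0n.
have Y1 : y * y ^+ n <= y * (x ^+ n + n%:R * (y - x)) by rewrite ler_wpM2l // (le_trans x0).
rewrite !exprS -[n.+1]addn1 natrD; set X := x ^+ n in X0 X1 Y1 *.
set Y := y ^+ n in Y1 *; set m := n%:R in n0 Y1 *.
have h1 : 0 <= (y - x) * (1 - X) by apply: mulr_ge0; lra.
have h2 : 0 <= (1 - y) * (m * (y - x)) by apply: mulr_ge0; [lra| apply: mulr_ge0; lra].
nra.
Qed.

Lemma cancel_pow (R : realFieldType) (x y A : R) n j :
  0 <= x -> x <= y -> 0 < y -> A * y ^+ (n + j) <= x ^+ (n + j) -> A * y ^+ n <= x ^+ n.
Proof.
move=> x0 xy y0; rewrite !exprD => H.
have yj : 0 < y ^+ j by rewrite exprn_gt0.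
rewrite -(ler_pM2r yj); apply: (le_trans _ (le_trans H _)); first by rewrite mulrA.
by rewrite ler_wpM2l ?exprn_ge0 // lerXn2r // ?nnegrE // (le_trans x0).
Qed.

Lemma choose_q (R : realFieldType) (q : R) (M : nat) : 0 < q -> q < 1 ->
  exists q' : R, [/\ 0 < q', q' < q &
    forall N a, (a <= N <= M)%N -> (1 - q' ^+ N) * (q' ^+ a * (1 - q') ^+ (N - a)) <= q ^+ a * (1 - q) ^+ (N - a)].
Proof.
move=> q0 q1.
pose c := (q * (1 - q) / 2) ^+ M.
have c0 : 0 < c by rewrite exprn_gt0 // divr_gt0 // mulr_gt0 // subr_gt0.
have b0 : 0 <= q * (1 - q) / 2 by apply: mulr_ge0; [apply: mulr_ge0|]; lra.
have b1 : q * (1 - q) / 2 <= 1.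
  have : q * (1 - q) <= 1 by nra.
  lra.
have c1 : c <= 1 by rewrite exprn_ile1.
pose delta := q / 2 * c / (M.+1)%:R.
have M0 : 0 < (M.+1)%:R :> R by rewrite ltr0n.
have d0 : 0 < delta by rewrite /delta !divr_gt0 // mulr_gt0 // divr_gt0.
have dM : delta * (M%:R + 1) = q / 2 * c by rewrite /delta natr1 divfK // gt_eqF.
have Mn : 0 <= M%:R :> R by rewrite ler0n.
have qc : q / 2 * c <= c by nra.
have dc : M%:R * delta <= c by nra.
have dq : delta <= q / 2 by nra.
exists (q - delta); split; [lra|lra|].
set q' := q - delta.
have key : (1 - q' ^+ M) * (1 - q') ^+ M <= (1 - q) ^+ M.
  have := @pow_diff R (1 - q) (1 - q') M.
  have hb : (q / 2 * (1 - q)) ^+ M <= (q' * (1 - q')) ^+ M.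
    apply: lerXn2r; rewrite ?nnegrE.
    - by apply: mulr_ge0; lra.
    - by apply: mulr_ge0; rewrite /q'; lra.
    apply: (@le_trans _ _ (q' * (1 - q))).
      by apply: ler_wpM2r; rewrite /q'; lra.
    by apply: ler_wpM2l; rewrite /q'; lra.
  have hc : (q / 2 * (1 - q)) ^+ M = c by rewrite /c mulrAC.
  rewrite hc in hb => pd.
  have e : (1 - q') - (1 - q) = delta by rewrite /q'; ring.
  rewrite e in pd; have {pd} pd := pd (ltac:(lra)) (ltac:(rewrite /q'; lra)) (ltac:(rewrite /q'; lra)).
  rewrite mulrBl mul1r -exprMn; lra.
move=> N a /andP [aN NM].
have y0 : 0 < 1 - q' by rewrite /q'; lra.
have xy : 1 - q <= 1 - q' by rewrite /q'; lra.
have x0 : 0 <= 1 - q by lra.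
have q'0 : 0 <= q' by rewrite /q'; lra.
have q'1 : q' <= 1 by rewrite /q'; lra.
have kN : (1 - q' ^+ N) * (1 - q') ^+ N <= (1 - q) ^+ N.
  apply: (@cancel_pow _ _ _ _ N (M - N)) => //; rewrite subnKC //.
  apply: le_trans key; apply: ler_wpM2r; first by rewrite exprn_ge0 // ltW.
  by rewrite lerD2l lerN2 ler_wiXn2l.
have kA : (1 - q' ^+ N) * (1 - q') ^+ (N - a) <= (1 - q) ^+ (N - a).
  by apply: (@cancel_pow _ _ _ _ (N - a) a) => //; rewrite subnK.
have qa : q' ^+ a <= q ^+ a by rewrite lerXn2r // ?nnegrE /q'; lra.
have N0 : 0 <= 1 - q' ^+ N by rewrite subr_ge0 exprn_ile1.
rewrite mulrCA; apply: (le_trans (ler_wpM2l (exprn_ge0 _ q'0) kA)).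
by rewrite ler_wpM2r ?exprn_ge0.
Qed.

Local Open Scope fset_scope.
Lemma prod_bool (T : Type) (R : comRingType) (r : seq T) (P : pred T) :
  \prod_(x <- r) (P x)%:R = (all P r)%:R :> R.
Proof.
elim: r => [|x r IH]; first by rewrite big_nil.
by rewrite big_cons IH /=; case: (P x); rewrite ?mul1r ?mul0r.
Qed.

Lemma law_split (K : choiceType) (R : comRingType) (L : seq K) (B : {fset K}) (p : R)
  (al be : K -> bool) :
  \prod_(x <- L) (if x \in B then p * (al x)%:R else (1 - p) * (be x)%:R) =
  \prod_(x <- L) (if x \in B then p else 1 - p) *
  (all (fun x => if x \in B then al x else be x) L)%:R.
Proof.
rewrite -prod_bool -big_split /=; apply: eq_bigr => x _.
by case: (x \in B).
Qed.

Lemma lawA_prod d (R : realDomainType) (p : R) m c (A : {fset word d}) :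
  lawA p m c A = if A \in subs (supp_set d m c) then
    \prod_(x <- supp_set d m c) (if x \in A then p else 1 - p) else 0.
Proof.
rewrite /lawA mem_subs; case: ifP => // H.
by rewrite prod_weight // supp_uniq.
Qed.

Lemma lawA_sum d (R : realDomainType) (p : R) m c :
  \sum_(A <- subs (supp_set d m c)) lawA p m c A = 1.
Proof.
rewrite (eq_big_seq (fun A : {fset word d} => \prod_(x <- supp_set d m c) (if x \in A then p else 1 - p))).
  by rewrite sum_subs_prod ?supp_uniq // (eq_bigr (fun _ => 1)) ?big1_eq // => x _; rewrite addrC subrK.
by move=> A HA; rewrite lawA_prod HA.
Qed.

Lemma sum_ind (T : eqType) (R : comRingType) (r : seq T) (x : T) (F : T -> R) :
  uniq r -> x \in r -> \sum_(y <- r) (x == y)%:R * F y = F x.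
Proof.
move=> ur xr; rewrite (eq_bigr (fun y => if y == x then F y else 0)); last first.
  by move=> y _; rewrite eq_sym; case: (y == x); rewrite ?mul1r ?mul0r.
by rewrite -big_mkcond -big_filter filter_pred1_uniq // big_seq1.
Qed.
Lemma lawA_ge0 d (R : realDomainType) (p : R) m c (A : {fset word d}) :
  0 <= p -> p <= 1 -> 0 <= lawA p m c A.
Proof.
move=> p0 p1; rewrite /lawA; case: ifP => // _.
by apply: mulr_ge0; apply: exprn_ge0; rewrite ?subr_ge0.
Qed.

Theorem lemma6 (R : realType) (d : nat) (hd : (2 <= d)%N) (k : nat) (q : R)
    (hq0 : 0 < q) (hq1 : q < 1) :
  exists q' : R, 0 < q' /\ q' < q /\
    forall b' : {fset nat},
      (forall i, i \in b' -> (1 <= i <= k.+1)%N) ->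
      let b := [fset i in b' | (i <= k)%N] in
      coupling (lawA q k b) (lawA q' k.+1 b')
        (fun A B => preceq (fun w : word d => w \in A) (fun w => w \in B)).
Proof.
pose M := (\sum_(n <- iota 0 k) size (layer d n))%N.
have [q' [q'0 q'q Hq']] := choose_q M hq0 hq1.
exists q'; split => //; split => // b' hb' b.
have d0 : (0 < d)%N by apply: ltnW.
pose j0 : 'I_d := Ordinal d0.
pose j1 : 'I_d := Ordinal hd.
have j01 : j0 != j1 by [].
pose Sg := supp_set d k b.
pose Sg' := supp_set d k.+1 b'.
pose N := size Sg.
have uS : uniq Sg by apply: supp_uniq.
have uS' : uniq Sg' by apply: supp_uniq.
have memS' : forall (j : 'I_d) w, w \in Sg -> (j :: w) \in Sg'.
  move=> j w; rewrite !mem_supp /= => /andP [H1 H2].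
  rewrite ltnS H1 subSS /=; move: H2; rewrite /b inE /=.
  by case/andP.
pose P1s := [seq j0 :: w | w <- Sg].
pose P2s := [seq j1 :: w | w <- Sg].
have P12 : forall x, x \in P1s -> x \notin P2s.
  move=> x /mapP [w _ ->]; apply/mapP => [[w' _ [E _]]].
  by move: E.
have uP1 : uniq P1s by rewrite map_inj_uniq // => ? ? [].
have uP2 : uniq P2s by rewrite map_inj_uniq // => ? ? [].
have sP1 : {subset P1s <= Sg'} by move=> x /mapP [w wS ->]; apply: memS'.
have sP2 : {subset P2s <= Sg'} by move=> x /mapP [w wS ->]; apply: memS'.
pose tau1 (B : {fset word d}) := seq_fset tt [seq w <- Sg | (j1 :: w) \in B].
have mem_tau : forall B w, (w \in tau1 B) = ((j1 :: w) \in B) && (w \in Sg).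
  by move=> B w; rewrite seq_fsetE mem_filter.
have tau_in : forall B, tau1 B \in subs Sg.
  move=> B; rewrite mem_subs; apply/allP => w; rewrite enumfsE mem_tau.
  by case/andP.
pose P1 (B : {fset word d}) := all (fun w => (j0 :: w) \in B) Sg.
pose lawB := @lawA d R q' k.+1 b'.
pose lA := @lawA d R q k b.
pose lA' := @lawA d R q' k b.
have qN0 : q' ^+ N != 0 by rewrite expf_neq0 // gt_eqF.
pose K (A B : {fset word d}) :=
  if P1 B then (lA A - (1 - q' ^+ N) * lA' A) / q' ^+ N else (A == tau1 B)%:R.
have sumK : forall B, \sum_(A <- subs Sg) K A B = 1.
  move=> B; rewrite /K; case HB: (P1 B).
    rewrite -mulr_suml sumrB.
    have -> : \sum_(A <- subs Sg) (1 - q' ^+ N) * lA' A = (1 - q' ^+ N) * \sum_(A <- subs Sg) lA' A.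
      by rewrite mulr_sumr.
    rewrite /lA /lA' !lawA_sum.
    by rewrite mulr1 opprB addrCA subrr addr0 divff.
  rewrite (eq_bigr (fun A => (tau1 B == A)%:R * 1)); last by move=> A _; rewrite eq_sym mulr1.
  by rewrite sum_ind ?subs_uniq.
have Kge0 : forall A B, 0 <= K A B.
  move=> A B; rewrite /K; case: ifP => _; last by rewrite ler0n.
  apply: divr_ge0; last by rewrite exprn_ge0 // ltW.
  rewrite subr_ge0 /lA /lA' /lawA -/Sg -/N; case: ifP => HA; last by rewrite mulr0.
  apply: Hq'; apply/andP; split.
    by apply: uniq_leq_size => //; apply/allP.
  exact: size_supp.
have q'1 : q' < 1 by apply: lt_trans hq1.
have gen : forall al be : word d -> bool,
    \sum_(B <- subs Sg') lawB B * (all (fun x => if x \in B then al x else be x) Sg')%:R =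
    \prod_(x <- Sg') (q' * (al x)%:R + (1 - q') * (be x)%:R).
  move=> al be; rewrite -sum_subs_prod //; apply: eq_big_seq => B HB.
  by rewrite law_split /lawB lawA_prod -/Sg' HB.
have E1 : forall B, P1 B = all (fun x => if x \in B then true else x \notin P1s) Sg'.
  move=> B; apply/allP/allP => H.
    move=> x xS; case xB: (x \in B) => //=; apply/mapP => [[w wS ex]].
    by move: (H w wS); rewrite -ex xB.
  move=> w wS; have := H _ (memS' j0 w wS); case: ifP => // _ /negP [].
  exact: map_f.
pose al2 (A : {fset word d}) (x : word d) := (x \in P2s) ==> (behead x \in A).
pose be2 (A : {fset word d}) (x : word d) := (x \in P2s) ==> (behead x \notin A).
have E2 : forall A B, A \in subs Sg ->
    (A == tau1 B) = all (fun x => if x \in B then al2 A x else be2 A x) Sg'.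
  move=> A B HA; apply/eqP/allP => [->|H].
    move=> x xS; rewrite /al2 /be2; case xB: (x \in B); apply/implyP => /mapP [w wS ex];
      by rewrite ex /= mem_tau -ex xB.
  apply/fsetP => w; rewrite mem_tau; case wA: (w \in A).
    have wS : w \in Sg by move: HA; rewrite mem_subs => /allP; apply.
    have := H _ (memS' j1 w wS); rewrite /al2 /be2 (map_f (cons j1) wS) /= wA.
    by case: ifP => // ->; rewrite wS.
  apply/esym/andP => [[xB wS]].
  by have := H _ (memS' j1 w wS); rewrite xB /al2 (map_f (cons j1) wS) /= wA.
have prod1 : \prod_(x <- Sg') (if x \in P1s then q' else 1) = q' ^+ N.
  by rewrite prod_restrict // prod_const_seq size_map.
have prod2 : forall A, A \in subs Sg ->
    \prod_(x <- Sg') (q' * (al2 A x)%:R + (1 - q') * (be2 A x)%:R) = lA' A.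
  move=> A HA; rewrite (eq_bigr (fun x => if x \in P2s then (if behead x \in A then q' else 1 - q') else 1)).
    by rewrite prod_restrict // big_map /lA' lawA_prod -/Sg HA.
  move=> x _; rewrite /al2 /be2; case: (x \in P2s) => /=; last by rewrite !mulr1 addrC subrK.
  by case: (behead x \in A); rewrite /= ?mulr1 ?mulr0 ?addr0 ?add0r.
have T1 : \sum_(B <- subs Sg') lawB B * (P1 B)%:R = q' ^+ N.
  rewrite -prod1 (eq_bigr (fun B => lawB B * (all (fun x => if x \in B then true else x \notin P1s) Sg')%:R)); last by move=> B _; rewrite E1.
  rewrite gen; apply: eq_bigr => x _; case: (x \in P1s).
    by rewrite mulr1 mulr0 addr0.
  by rewrite !mulr1 addrC subrK.
have T2 : forall A, A \in subs Sg -> \sum_(B <- subs Sg') lawB B * (A == tau1 B)%:R = lA' A.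
  move=> A HA; rewrite (eq_bigr (fun B => lawB B * (all (fun x => if x \in B then al2 A x else be2 A x) Sg')%:R)); last by move=> B _; rewrite E2.
  by rewrite gen prod2.
have T3 : forall A, A \in subs Sg ->
    \sum_(B <- subs Sg') lawB B * (P1 B && (A == tau1 B))%:R = q' ^+ N * lA' A.
  move=> A HA; rewrite (eq_bigr (fun B => lawB B * (all (fun x => if x \in B then al2 A x else (x \notin P1s) && be2 A x) Sg')%:R)); last first.
    move=> B _; rewrite E1 E2 // -all_predI.
    rewrite (@eq_all _ _ (fun x => if x \in B then al2 A x else (x \notin P1s) && be2 A x)) //.
    by move=> x /=; case: (x \in B).
  rewrite gen -prod1 -(prod2 A HA) -big_split /=; apply: eq_bigr => x _.
  case x1: (x \in P1s).
    have := P12 _ x1; rewrite /al2 /be2 => /negbTE -> /=.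
    by ring.
  by rewrite mul1r.
have margA : forall A, A \in subs Sg -> \sum_(B <- subs Sg') lawB B * K A B = lA A.
  move=> A HA; pose c := (lA A - (1 - q' ^+ N) * lA' A) / q' ^+ N.
  rewrite (eq_bigr (fun B => (c * (lawB B * (P1 B)%:R) + lawB B * (A == tau1 B)%:R) - lawB B * (P1 B && (A == tau1 B))%:R)); last first.
    move=> B _; rewrite /K -/c; case: (P1 B); case: (A == tau1 B) => /=; ring.
  rewrite sumrB big_split /= -mulr_sumr T1 T2 // T3 //.
  rewrite /c divfK //; ring.
have q'01 : 0 <= q' <= 1 by rewrite !ltW.
have mem_s : forall A B, ((A, B) \in [seq (A, B) | A <- subs Sg, B <- subs Sg']) =
    (A \in subs Sg) && (B \in subs Sg').
  move=> A B; apply/allpairsP/andP => [[[x y] /= [? ? [-> ->]]]|[? ?]]; first by split.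
  by exists (A, B).
exists (fun p => lawB p.2 * K p.1 p.2), [seq (A, B) | A <- subs Sg, B <- subs Sg'].
split.
  by apply: allpairs_uniq; rewrite ?subs_uniq // => [[? ?] [? ?]].
split.
  move=> [A B] /=; apply: mulr_ge0 => //; apply: lawA_ge0; rewrite ltW //.
split.
  move=> [A B]; rewrite mem_s negb_and => /orP [HA|HB] /=.
    rewrite /K; case: ifP => _.
      by rewrite /lA /lA' !lawA_prod -/Sg (negbTE HA) mulr0 subr0 mul0r mulr0.
    case: eqP => [E|_]; last by rewrite mulr0.
    by move: HA; rewrite E tau_in.
  by rewrite /lawB lawA_prod -/Sg' (negbTE HB) mul0r.
split.
  rewrite big_allpairs /= exchange_big /=.
  rewrite (eq_bigr (fun B => lawB B)) ?lawA_sum // => B _.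
  by rewrite -mulr_sumr sumK mulr1.
split.
  move=> S; rewrite big_mkcond big_allpairs /=.
  case HS: (S \in subs Sg).
    rewrite (eq_bigr (fun A => (S == A)%:R * \sum_(B <- subs Sg') lawB B * K A B)).
      by rewrite sum_ind ?subs_uniq // margA.
    move=> A _; rewrite (eq_sym S A); case: (A == S); rewrite /= ?mulr1n ?mulr0n ?mul1r ?mul0r //.
    by rewrite big1.
  rewrite lawA_prod -/Sg HS big1_seq // => A /andP [_ HA].
  rewrite big1 // => B _; case: eqP => // E.
  by move: HS; rewrite -E HA.
split.
  move=> S; rewrite big_mkcond big_allpairs /= exchange_big /=.
  case HS: (S \in subs Sg').
    rewrite (eq_bigr (fun B => (S == B)%:R * lawB B)).
      by rewrite sum_ind ?subs_uniq.
    move=> B _; rewrite (eq_sym S B); case: (B == S); rewrite /= ?mulr1n ?mulr0n ?mul1r ?mul0r.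
      by rewrite -mulr_sumr sumK mulr1.
    by rewrite big1.
  rewrite lawA_prod -/Sg' HS big1_seq // => B /andP [_ HB].
  rewrite big1 // => A _; case: eqP => // E.
  by move: HS; rewrite -E HB.
move=> [A B]; rewrite mem_s => /andP [HA HB] /= pos.
have Kpos : K A B != 0 by apply/eqP => E; rewrite E mulr0 ltxx in pos.
move: Kpos; rewrite /K; case HP: (P1 B) => Kpos.
  exists [::], [:: j0]; split; first by move=> w _; exists w.
  move=> x /= xA; split; last by exists x.
  have xS : x \in Sg by move: HA; rewrite mem_subs => /allP; apply.
  by move: HP => /allP /(_ x xS).
move: Kpos; case: (@eqP _ A (tau1 B)) => [-> _|_]; last by rewrite mulr0n eqxx.
exists [::], [:: j1]; split; first by move=> w _; exists w.
move=> x; rewrite /shift /= mem_tau => /andP [xB _]; split => //; by exists x.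
Qed.
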